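(* Let $\alpha>0$ be an ordinal and let $\mathcal{X},\mathcal{Y}$ be families of metric spaces. If $\mathcal{Y}\in\mathfrak{C}_\alpha$ and $\mathcal{X}\xrightarrow{R}\mathcal{Y}$ for every $R\in\mathbb{R}^{\mathbb{N}}$, then $\mathcal{X}\in\mathfrak{C}_\alpha$.
   Context: A family $\mathcal{U}$ of metric subspaces of a metric space $(X,d)$ is $r$-disjoint if $d(x,y)>r$ whenever $x\in U$, $y\in U'$, $U\neq U'$ in $\mathcal{U}$. For families $\mathcal{X},\mathcal{Y}$ and $R\in\mathbb{R}^{\mathbb{N}}$, $\mathcal{X}\xrightarrow{R}\mathcal{Y}$ (uniform $R$-decomposability) means: there is an integer $k$ such that for each $X\in\mathcal{X}$ there are subcollections $\mathcal{U}_1,\dots,\mathcal{U}_k\subseteq\mathcal{Y}$ of subspaces of $X$, each $\mathcal{U}_i$ being $R_i$-disjoint, with $\bigcup_i\mathcal{U}_i$ covering $X$. A family is bounded if the diameters of its members are uniformly bounded. $\mathfrak{C}_0$ is the class of bounded families; for an ordinal $\alpha>0$, $\mathfrak{C}_\alpha$ is the class of families $\mathcal{X}$ such that for every $R\in\mathbb{R}^{\mathbb{N}}$ there exist $\beta<\alpha$ and $\mathcal{Y}\in\mathfrak{C}_\beta$ with $\mathcal{X}\xrightarrow{R}\mathcal{Y}$. *)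

(* Defs.v *)
From Stdlib Require Import Reals.
Open Scope R_scope.

Record MetricSpace := {
  carrier :> Type;
  dist : carrier -> carrier -> R;
  dist_refl : forall x, dist x x = 0;
  dist_sep : forall x y, dist x y = 0 -> x = y;
  dist_sym : forall x y, dist x y = dist y x;
  dist_tri : forall x y z, dist x z <= dist x y + dist y z
}.

(* A metric subspace of M is a subset of M with the induced metric. *)
Definition subspace (M : MetricSpace) := M -> Prop.

Definition mfamily (M : MetricSpace) := subspace M -> Prop.

Definition subset {M : MetricSpace} (A B : subspace M) : Prop :=
  forall x, A x -> B x.

Definition r_disjoint {M : MetricSpace} (r : R) (U : mfamily M) : Prop :=
  forall V V', U V -> U V' -> V <> V' ->
    forall x y, V x -> V' y -> dist M x y > r.

(* Uniform R-decomposability  X --R--> Y  (R_1, ..., R_k used). *)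
Definition decomposes {M : MetricSpace} (Rs : nat -> R) (X Y : mfamily M) : Prop :=
  exists k : nat, forall A, X A ->
    exists U : nat -> mfamily M,
      (forall i, (1 <= i <= k)%nat -> forall V, U i V -> Y V /\ subset V A) /\
      (forall i, (1 <= i <= k)%nat -> r_disjoint (Rs i) (U i)) /\
      (forall x, A x -> exists i, (1 <= i <= k)%nat /\ exists V, U i V /\ V x).

Definition bounded_family {M : MetricSpace} (X : mfamily M) : Prop :=
  exists B : R, forall A, X A -> forall x y, A x -> A y -> dist M x y <= B.

(* Ordinals are represented as elements of a well-ordered type (O, lt);
   the classes C_alpha are defined by (well-founded) recursion as the
   least predicate satisfying the defining clauses. *)
Inductive inC {O : Type} (lt : O -> O -> Prop) {M : MetricSpace}
  : O -> mfamily M -> Prop :=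
| inC_zero : forall (a : O) (X : mfamily M),
    (forall b, ~ lt b a) -> bounded_family X -> inC lt a X
| inC_succ : forall (a : O) (X : mfamily M),
    (exists b, lt b a) ->
    (forall Rs : nat -> R, exists (b : O) (Y : mfamily M),
        lt b a /\ inC lt b Y /\ decomposes Rs X Y) ->
    inC lt a X.

Definition well_order {O : Type} (lt : O -> O -> Prop) : Prop :=
  well_founded lt /\
  (forall a b c, lt a b -> lt b c -> lt a c) /\
  (forall a b, lt a b \/ a = b \/ lt b a).

(* Main.v *)
Require Import Defs.
From Stdlib Require Import Reals Lra Lia ClassicalEpsilon Classical.
Open Scope R_scope.

Definition dconds {M : MetricSpace} (Rs : nat -> R) (k : nat) (A : subspace M)
  (Y : mfamily M) (U : nat -> mfamily M) : Prop :=
      (forall i, (1 <= i <= k)%nat -> forall V, U i V -> Y V /\ subset V A) /\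
      (forall i, (1 <= i <= k)%nat -> r_disjoint (Rs i) (U i)) /\
      (forall x, A x -> exists i, (1 <= i <= k)%nat /\ exists V, U i V /\ V x).

Lemma decomposes_refl {M : MetricSpace} Rs (Z : mfamily M) : decomposes Rs Z Z.
Proof.
  exists 1%nat. intros A HA. exists (fun _ V => V = A). split; [|split].
  - intros i _ V ->. split; [exact HA| intros x Hx; exact Hx].
  - intros i _ V V' -> -> Hne. congruence.
  - intros x Hx. exists 1%nat. split; [lia|]. exists A. auto.
Qed.

Lemma inC_mono (O : Type) (lt : O -> O -> Prop) (M : MetricSpace) b c (Z : mfamily M) :
  inC lt b Z -> lt b c -> inC lt c Z.
Proof.
  intros H Hbc. apply inC_succ. { exists b; auto. }
  intros Rs. exists b, Z. repeat split; auto. apply decomposes_refl.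
Qed.

Lemma decomposes_sub {M : MetricSpace} Rs (X X' Y : mfamily M) :
  (forall A, X' A -> X A) -> decomposes Rs X Y -> decomposes Rs X' Y.
Proof. intros Hs [k Hk]. exists k. intros A HA. apply Hk, Hs, HA. Qed.

Lemma inC_sub (O : Type) (lt : O -> O -> Prop) (M : MetricSpace) c (Z Z' : mfamily M) :
  (forall V, Z' V -> Z V) -> inC lt c Z -> inC lt c Z'.
Proof.
  intros Hs H. destruct H as [a X Hn [B HB] | a X Hp HR].
  - apply inC_zero; auto. exists B. intros A HA; apply HB, Hs, HA.
  - apply inC_succ; auto. intros Rs. destruct (HR Rs) as (b & Y & H1 & H2 & H3).
    exists b, Y. split; [|split]; auto. eapply decomposes_sub; eauto.
Qed.

Lemma decomposes_union1 {M : MetricSpace} Rs (Z1 W1 W2 : mfamily M) k1 k2 A :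
  (forall A, Z1 A -> exists U, dconds Rs k1 A W1 U) -> Z1 A ->
  exists U, dconds Rs (Nat.max k1 k2) A (fun V => W1 V \/ W2 V) U.
Proof.
  intros H1 HA.
  destruct (H1 A HA) as (U & Ha & Hb & Hc). exists (fun i V => (i <= k1)%nat /\ U i V).
  split; [|split].
  + intros i Hi V [Hik HV]. destruct (Ha i ltac:(lia) V HV). split; auto.
  + intros i Hi V V' [Hik HV] [_ HV'] Hne x y Hx Hy. exact (Hb i ltac:(lia) V V' HV HV' Hne x y Hx Hy).
  + intros x Hx. destruct (Hc x Hx) as (i & Hi & V & HV & Hv). exists i. split; [lia|].
    exists V. split; [split; [lia|exact HV]|exact Hv].
Qed.

Lemma decomposes_union {M : MetricSpace} Rs (Z1 Z2 W1 W2 : mfamily M) :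
  decomposes Rs Z1 W1 -> decomposes Rs Z2 W2 ->
  decomposes Rs (fun V => Z1 V \/ Z2 V) (fun V => W1 V \/ W2 V).
Proof.
  intros [k1 H1] [k2 H2]. exists (Nat.max k1 k2). intros A [HA|HA].
  - apply (decomposes_union1 Rs Z1 W1 W2 k1 k2 A H1 HA).
  - rewrite Nat.max_comm.
    destruct (decomposes_union1 Rs Z2 W2 W1 k2 k1 A H2 HA) as (U & Ha & Hb & Hc).
    exists U. split; [|split]; auto.
    intros i Hi V HV. destruct (Ha i Hi V HV) as [[h|h] h']; auto.
Qed.

Lemma inC_union (O : Type) (lt : O -> O -> Prop) (Hwo : well_order lt) (M : MetricSpace) :
  forall a (Z1 Z2 : mfamily M), inC lt a Z1 -> inC lt a Z2 ->
  inC lt a (fun V => Z1 V \/ Z2 V).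
Proof.
  destruct Hwo as (Hwf & Htr & Htri).
  intros a. induction a as [a IH] using (well_founded_ind Hwf).
  intros Z1 Z2 H1 H2.
  inversion H1 as [a1 X1 Hn1 [B1 HB1] E1 E2 | a1 X1 Hp1 HR1 E1 E2]; subst;
  inversion H2 as [a2 X2 Hn2 [B2 HB2] E3 E4 | a2 X2 Hp2 HR2 E3 E4]; subst.
  - apply inC_zero; auto. exists (Rmax B1 B2). intros A [HA|HA] x y Hx Hy.
    + eapply Rle_trans; [eapply HB1; eauto | apply Rmax_l].
    + eapply Rle_trans; [eapply HB2; eauto | apply Rmax_r].
  - destruct Hp2 as [b Hb]. exfalso; eapply Hn1; eauto.
  - destruct Hp1 as [b Hb]. exfalso; eapply Hn2; eauto.
  - apply inC_succ; auto. intros Rs.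
    destruct (HR1 Rs) as (b1 & W1 & Hl1 & Hc1 & Hd1).
    destruct (HR2 Rs) as (b2 & W2 & Hl2 & Hc2 & Hd2).
    destruct (Htri b1 b2) as [Hlt|[Heq|Hlt]].
    + exists b2, (fun V => W1 V \/ W2 V). split; auto. split.
      * apply IH; auto. eapply inC_mono; eauto.
      * apply decomposes_union; auto.
    + subst. exists b2, (fun V => W1 V \/ W2 V). split; auto. split.
      * apply IH; auto.
      * apply decomposes_union; auto.
    + exists b1, (fun V => W1 V \/ W2 V). split; auto. split.
      * apply IH; auto. eapply inC_mono; eauto.
      * apply decomposes_union; auto.
Qed.

Lemma inC_finunion (O : Type) (lt : O -> O -> Prop) (Hwo : well_order lt) (M : MetricSpace)
  alpha (Zf : nat -> mfamily M) (bf : nat -> O) :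
  (forall t, lt (bf t) alpha /\ inC lt (bf t) (Zf t)) ->
  forall k, exists c, lt c alpha /\ inC lt c (fun V => exists t, (t < k)%nat /\ Zf t V).
Proof.
  intros H k. induction k as [|k IHk].
  - exists (bf 0%nat). destruct (H 0%nat) as [H1 H2]. split; auto.
    eapply inC_sub; [|exact H2]. intros V (t & Ht & _). lia.
  - destruct IHk as (c & Hc & HC). destruct (H k) as [Hbk HCk].
    pose proof Hwo as (Hwf & Htr & Htri).
    assert (Hsub : forall V, (exists t, (t < S k)%nat /\ Zf t V) ->
                   (exists t, (t < k)%nat /\ Zf t V) \/ Zf k V).
    { intros V (t & Ht & HV). destruct (Nat.eq_dec t k) as [->|Hne]; [right; auto|].
      left; exists t; split; [lia|auto]. }
    destruct (Htri c (bf k)) as [h|[h|h]].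
    + exists (bf k). split; auto. eapply inC_sub; [exact Hsub|].
      apply inC_union; auto. eapply inC_mono; eauto.
    + subst. exists (bf k). split; auto. eapply inC_sub; [exact Hsub|].
      apply inC_union; auto.
    + exists c. split; auto. eapply inC_sub; [exact Hsub|].
      apply inC_union; auto. eapply inC_mono; eauto.
Qed.

Fixpoint Rhat (R0 : nat -> R) (n : nat) : R :=
  match n with 0%nat => R0 0%nat | S n' => Rmax (Rhat R0 n') (R0 n) end.

Lemma Rhat_ge R0 n : R0 n <= Rhat R0 n.
Proof. destruct n; simpl; [lra| apply Rmax_r]. Qed.

Lemma Rhat_mono R0 a b : (a <= b)%nat -> Rhat R0 a <= Rhat R0 b.
Proof. induction 1; [lra| simpl; eapply Rle_trans; [eauto|apply Rmax_l]]. Qed.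

Lemma decomposes_weaken {M : MetricSpace} (R1 R2 : nat -> R) (X Y : mfamily M) :
  (forall i, R1 i <= R2 i) -> decomposes R2 X Y -> decomposes R1 X Y.
Proof.
  intros Hle [k Hk]. exists k. intros A HA. destruct (Hk A HA) as (U & Ha & Hb & Hc).
  exists U. split; [|split]; auto.
  intros i Hi V V' HV HV' Hne x y Hx Hy. specialize (Hb i Hi V V' HV HV' Hne x y Hx Hy).
  specialize (Hle i). lra.
Qed.

Fixpoint sseq (mm : (nat -> R) -> nat) (Rh : nat -> R) (t : nat) : nat :=
  match t with
  | 0%nat => 0%nat
  | S t' => (sseq mm Rh t' + mm (fun j => Rh (sseq mm Rh t' + j)%nat))%nat
  end.

Lemma sseq_mono mm Rh a b : (a <= b)%nat -> (sseq mm Rh a <= sseq mm Rh b)%nat.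
Proof. induction 1; [lia| simpl; lia]. Qed.

Theorem mainTheorem5 (O : Type) (lt : O -> O -> Prop) (Hwo : well_order lt)
  (alpha : O) (Halpha : exists b, lt b alpha)
  (M : MetricSpace) (X Y : mfamily M) :
  inC lt alpha Y ->
  (forall Rs : nat -> R, decomposes Rs X Y) ->
  inC lt alpha X.
Proof.
  intros HY HXY.
  assert (HYs : forall Rs, exists b W, lt b alpha /\ inC lt b W /\ decomposes Rs Y W).
  { inversion HY as [a1 X1 Hn1 HB E1 E2 | a1 X1 Hp1 HR1 E1 E2]; subst.
    - destruct Halpha as [b Hb]. exfalso; eapply Hn1; eauto.
    - assumption. }
  destruct (choice (fun (Rs : nat -> R) (p : O * (mfamily M * nat)) =>
     lt (fst p) alpha /\ inC lt (fst p) (fst (snd p)) /\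
     forall A, Y A -> exists U, dconds Rs (snd (snd p)) A (fst (snd p)) U)) as [f Hf].
  { intros Rs. destruct (HYs Rs) as (b & W & H1 & H2 & [k Hk]). exists (b, (W, k)).
    simpl. auto. }
  destruct (choice (fun (p : (nat -> R) * subspace M) (U : nat -> mfamily M) =>
     Y (snd p) -> dconds (fst p) (snd (snd (f (fst p)))) (snd p) (fst (snd (f (fst p)))) U))
     as [g Hg].
  { intros [Rs A]. simpl. destruct (classic (Y A)) as [HA|HA].
    - destruct (Hf Rs) as (_ & _ & H3). destruct (H3 A HA) as [U HU]. exists U. auto.
    - exists (fun _ _ => False). intro; contradiction. }
  apply inC_succ; [exact Halpha|]. intros R0.
  pose (Rh := Rhat R0).
  pose (mm := fun Rs => snd (snd (f Rs))).
  pose (s := sseq mm Rh).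
  pose (T := fun t j => Rh (s t + j)%nat).
  assert (HsS : forall t, s (S t) = (s t + mm (T t))%nat) by reflexivity.
  assert (Hsm : forall a b, (a <= b)%nat -> (s a <= s b)%nat) by (intros; apply sseq_mono; auto).
  destruct (HXY (fun i => Rh (s i))) as [k Hk].
  destruct (inC_finunion O lt Hwo M alpha (fun t => fst (snd (f (T t)))) (fun t => fst (f (T t))))
    with (k := k) as (c & Hc & HC).
  { intros t. destruct (Hf (T t)) as (H1 & H2 & _). auto. }
  exists c, (fun V => exists t, (t < k)%nat /\ fst (snd (f (T t))) V). split; [exact Hc|]. split; [exact HC|].
  apply decomposes_weaken with Rh; [apply Rhat_ge|].
  exists (s k). intros A HA. destruct (Hk A HA) as (U & Ua & Ub & Uc).
  exists (fun n V => exists t, (t < k)%nat /\ (s t < n <= s (S t))%nat /\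
            exists P, U (S t) P /\ g (T t, P) (n - s t)%nat V).
  split; [|split].
  - intros n Hn V (t & Ht & Hst & P & HP & HV).
    destruct (Ua (S t) ltac:(lia) P HP) as [HYP HPA].
    destruct (Hg (T t, P) HYP) as (Da & Db & Dc). simpl in Da.
    specialize (HsS t). unfold mm in HsS.
    destruct (Da (n - s t)%nat ltac:(lia) V HV) as [HW HVP]. split.
    + exists t; split; auto.
    + intros x Hx; apply HPA, HVP, Hx.
  - intros n Hn V V' (t & Ht & Hst & P & HP & HV) (t' & Ht' & Hst' & P' & HP' & HV') Hne x y Hx Hy.
    assert (t = t') as <-.
    { destruct (Nat.lt_trichotomy t t') as [h|[h|h]]; auto.
      - pose proof (Hsm (S t) t' h). lia.
      - pose proof (Hsm (S t') t h). lia. }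
    destruct (Ua (S t) ltac:(lia) P HP) as [HYP HPA].
    destruct (Ua (S t) ltac:(lia) P' HP') as [HYP' HPA'].
    destruct (classic (P = P')) as [<-|HPP].
    + destruct (Hg (T t, P) HYP) as (Da & Db & Dc). simpl in Db.
      specialize (HsS t). unfold mm in HsS.
      pose proof (Db (n - s t)%nat ltac:(lia) V V' HV HV' Hne x y Hx Hy) as Hd.
      unfold T in Hd. replace (s t + (n - s t))%nat with n in Hd by lia. exact Hd.
    + destruct (Hg (T t, P) HYP) as (Da & _ & _).
      destruct (Hg (T t, P') HYP') as (Da' & _ & _). simpl in Da, Da'.
      specialize (HsS t). unfold mm in HsS.
      destruct (Da (n - s t)%nat ltac:(lia) V HV) as [_ HVP].
      destruct (Da' (n - s t)%nat ltac:(lia) V' HV') as [_ HVP'].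
      pose proof (Ub (S t) ltac:(lia) P P' HP HP' HPP x y (HVP x Hx) (HVP' y Hy)) as Hd.
      pose proof (Rhat_mono R0 n (s (S t)) ltac:(lia)) as Hm. fold Rh in Hm. lra.
  - intros x Hx. destruct (Uc x Hx) as (i & Hi & P & HP & HPx).
    destruct i as [|t]; [lia|].
    destruct (Ua (S t) Hi P HP) as [HYP HPA].
    destruct (Hg (T t, P) HYP) as (_ & _ & Dc). simpl in Dc.
    specialize (HsS t). unfold mm in HsS.
    destruct (Dc x HPx) as (j & Hj & V & HV & Hv).
    pose proof (Hsm (S t) k ltac:(lia)).
    exists (s t + j)%nat. split; [lia|]. exists V. split; auto.
    exists t. split; [lia|]. split; [lia|]. exists P. split; auto.
    replace (s t + j - s t)%nat with j by lia. exact HV.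
Qed.
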